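(* Let $A$ be a two-dimensional evolution algebra over a field $\mathbb{K}$ with $A^2=A$. Then the Lie algebra $\mathrm{Der}(A)$ of derivations of $A$ is zero, except when $\mathrm{char}(\mathbb{K})=3$ and $A\cong A_{2,\alpha}$ for some $\alpha\in\mathbb{K}^\times$. If $\mathrm{char}(\mathbb{K})=3$, then $\mathrm{Der}(A_{2,\alpha})=\{d_a : a\in\mathbb{K}\}$, where, with respect to a natural basis $\{e_1,e_2\}$ with $e_1^2=e_2$, $e_2^2=\alpha e_1$, the map $d_a$ is given by $d_a(re_1+se_2)=are_1-ase_2$; and $\mathrm{Der}(A)=0$ whenever $A$ is not isomorphic to any $A_{2,\alpha}$.
   Context: An evolution algebra over $\mathbb{K}$ is a $\mathbb{K}$-algebra with a basis $\{e_i\}$ (natural basis) such that $e_ie_j=0$ for $i\neq j$. $A_{2,\alpha}$ ($\alpha\in\mathbb{K}^\times$) is the evolution algebra with natural basis $\{e_1,e_2\}$, $e_1^2=e_2$, $e_2^2=\alpha e_1$. A derivation is a linear map $d$ with $d(xy)=d(x)y+xd(y)$. *)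

(* Defs.v *)
From HB Require Import structures.
From mathcomp Require Import all_boot all_order all_algebra.
Set Implicit Arguments. Unset Strict Implicit. Unset Printing Implicit Defensive.
Import Order.TTheory GRing.Theory.
Local Open Scope ring_scope.

(* A two-dimensional K-algebra is modelled (up to isomorphism) as K^2 = 'rV[K]_2
   with a multiplication m; linear maps act on the right by matrices. *)
Definition vec2 (K : fieldType) := 'rV[K]_2.

Definition bilinear_mul (K : fieldType) (m : vec2 K -> vec2 K -> vec2 K) : Prop :=
  (forall (a : K) x y z, m (a *: x + y) z = a *: m x z + m y z) /\
  (forall (a : K) x y z, m z (a *: x + y) = a *: m z x + m z y).

Definition e1 (K : fieldType) : vec2 K := delta_mx 0 0.
Definition e2 (K : fieldType) : vec2 K := delta_mx 0 1.

Definition is_evolution (K : fieldType) (m : vec2 K -> vec2 K -> vec2 K) : Prop :=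
  exists b1 b2 : vec2 K,
    (forall r s : K, r *: b1 + s *: b2 = 0 -> r = 0 /\ s = 0) /\
    m b1 b2 = 0 /\ m b2 b1 = 0.

Definition square_full (K : fieldType) (m : vec2 K -> vec2 K -> vec2 K) : Prop :=
  forall z : vec2 K, exists s : seq (vec2 K * vec2 K),
    z = \sum_(p <- s) m p.1 p.2.

Definition is_derivation (K : fieldType) (m : vec2 K -> vec2 K -> vec2 K)
  (D : 'M[K]_2) : Prop :=
  forall x y : vec2 K, m x y *m D = m (x *m D) y + m x (y *m D).

(* The evolution algebra A_{2,alpha}: natural basis e1, e2 with
   e1^2 = e2, e2^2 = alpha e1, e1 e2 = e2 e1 = 0. *)
Definition A2mul (K : fieldType) (alpha : K) (x y : vec2 K) : vec2 K :=
  (alpha * (x 0 1 * y 0 1)) *: e1 K + (x 0 0 * y 0 0) *: e2 K.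

Definition alg_iso (K : fieldType) (m m' : vec2 K -> vec2 K -> vec2 K) : Prop :=
  exists P : 'M[K]_2, P \in unitmx /\
    forall x y : vec2 K, m x y *m P = m' (x *m P) (y *m P).

(* Main.v *)
Require Import Defs.
From HB Require Import structures.
From mathcomp Require Import all_boot all_order all_algebra.
From mathcomp Require Import ring.
Import Order.TTheory GRing.Theory.
Local Open Scope ring_scope.
Set Implicit Arguments. Unset Strict Implicit.

Section S.
Variable K : fieldType.
Implicit Types (x y : vec2 K) (A : 'M[K]_2).

Lemma ord2 (j : 'I_2) : j = 0 \/ j = 1.
Proof. case: j => [[|[|j]] Hj]; [left|right|by []]; exact: val_inj. Qed.

Lemma mulE x A j : (x *m A) 0 j = x 0 0 * A 0 j + x 0 1 * A 1 j.
Proof.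
rewrite !mxE !big_ord_recl big_ord0 addr0.
have -> : lift ord0 ord0 = 1 :> 'I_2 by apply: val_inj.
done.
Qed.

Lemma e1E i j : e1 K i j = (j == 0)%:R.
Proof. by rewrite mxE (ord1 i). Qed.
Lemma e2E i j : e2 K i j = (j == 1)%:R.
Proof. by rewrite mxE (ord1 i). Qed.

Lemma vecP x y : x 0 0 = y 0 0 -> x 0 1 = y 0 1 -> x = y.
Proof. move=> h0 h1; apply/rowP => j; case: (ord2 j) => ->; done. Qed.

Lemma vecE x : x = x 0 0 *: e1 K + x 0 1 *: e2 K.
Proof. apply: vecP; rewrite !mxE /=; ring. Qed.


Section M.
Variable m : vec2 K -> vec2 K -> vec2 K.
Hypothesis Hb : bilinear_mul m.

Lemma bmul0l y : m 0 y = 0.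
Proof.
have := Hb.1 (-1) 0 0 y; rewrite scaler0 addr0 scaleN1r.
by move=> /eqP; rewrite eq_sym addNr => /eqP.
Qed.
Lemma bmul0r y : m y 0 = 0.
Proof.
have := Hb.2 (-1) 0 0 y; rewrite scaler0 addr0 scaleN1r.
by move=> /eqP; rewrite eq_sym addNr => /eqP.
Qed.
Lemma bmulZl a x y : m (a *: x) y = a *: m x y.
Proof. by have := Hb.1 a x 0 y; rewrite addr0 bmul0l addr0. Qed.
Lemma bmulZr a x y : m y (a *: x) = a *: m y x.
Proof. by have := Hb.2 a x 0 y; rewrite addr0 bmul0r addr0. Qed.
Lemma bmulDl x z y : m (x + z) y = m x y + m z y.
Proof. by have := Hb.1 1 x z y; rewrite !scale1r. Qed.
Lemma bmulDr x z y : m y (x + z) = m y x + m y z.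
Proof. by have := Hb.2 1 x z y; rewrite !scale1r. Qed.

Hypothesis h12 : m (e1 K) (e2 K) = 0.
Hypothesis h21 : m (e2 K) (e1 K) = 0.

Lemma expand x y : m x y = (x 0 0 * y 0 0) *: m (e1 K) (e1 K) + (x 0 1 * y 0 1) *: m (e2 K) (e2 K).
Proof.
rewrite {1}(vecE x) {1}(vecE y) !bmulDl !bmulZl !bmulDr !bmulZr h12 h21.
by rewrite !scaler0 addr0 add0r !scalerA.
Qed.

Lemma expandE x y j : m x y 0 j = x 0 0 * y 0 0 * m (e1 K) (e1 K) 0 j + x 0 1 * y 0 1 * m (e2 K) (e2 K) 0 j.
Proof. by rewrite expand !mxE. Qed.


Lemma expandE' c1 c2 : m (e1 K) (e1 K) = c1 -> m (e2 K) (e2 K) = c2 ->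
  forall x y j, m x y 0 j = x 0 0 * y 0 0 * c1 0 j + x 0 1 * y 0 1 * c2 0 j.
Proof. by move=> <- <- x y j; rewrite expandE. Qed.

Lemma fromE (u v w : K) : u = v -> w = v - u -> w = 0.
Proof. by move=> -> ->; rewrite subrr. Qed.

Lemma core_std D c1 c2 : is_derivation m D ->
  m (e1 K) (e1 K) = c1 -> m (e2 K) (e2 K) = c2 ->
  c1 0 0 * c2 0 1 - c1 0 1 * c2 0 0 != 0 ->
  D = 0 \/ ((3%:R : K) = 0 /\ exists alpha : K, alpha != 0 /\ alg_iso m (A2mul alpha)).
Proof.
move=> HD hc1 hc2 hdet.
have X := expandE' hc1 hc2.
have E x y j : (m x y *m D) 0 j = m (x *m D) y 0 j + m x (y *m D) 0 j.
  by rewrite (HD x y) mxE.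
have Eq x y j := E x y j.
have EE x y j : (m x y *m D) 0 j = m (x *m D) y 0 j + m x (y *m D) 0 j := E x y j.
have q0 : D 0 1 * c2 0 0 + D 1 0 * c1 0 0 = 0.
  have := EE (e1 K) (e2 K) 0; rewrite mulE !X !mulE ?e1E ?e2E /=.
  by move/fromE; apply; ring.
have q1 : D 0 1 * c2 0 1 + D 1 0 * c1 0 1 = 0.
  have := EE (e1 K) (e2 K) 1; rewrite mulE !X !mulE ?e1E ?e2E /=.
  by move/fromE; apply; ring.
have d01 : D 0 1 = 0.
  have : D 0 1 * (c1 0 0 * c2 0 1 - c1 0 1 * c2 0 0) = 0.
    have -> : D 0 1 * (c1 0 0 * c2 0 1 - c1 0 1 * c2 0 0) = c1 0 0 * (D 0 1 * c2 0 1 + D 1 0 * c1 0 1) - c1 0 1 * (D 0 1 * c2 0 0 + D 1 0 * c1 0 0) by ring.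
    by rewrite q0 q1 !mulr0 subrr.
  by move/eqP; rewrite mulf_eq0 (negbTE hdet) orbF => /eqP.
have d10 : D 1 0 = 0.
  have : D 1 0 * (c1 0 0 * c2 0 1 - c1 0 1 * c2 0 0) = 0.
    have -> : D 1 0 * (c1 0 0 * c2 0 1 - c1 0 1 * c2 0 0) = c2 0 1 * (D 0 1 * c2 0 0 + D 1 0 * c1 0 0) - c2 0 0 * (D 0 1 * c2 0 1 + D 1 0 * c1 0 1) by ring.
    by rewrite q0 q1 !mulr0 subrr.
  by move/eqP; rewrite mulf_eq0 (negbTE hdet) orbF => /eqP.
have r0 : c1 0 0 * D 0 0 - c1 0 1 * D 1 0 = 0.
  have := EE (e1 K) (e1 K) 0; rewrite mulE !X !mulE ?e1E ?e2E /=.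
  by move/fromE; apply; ring.
have r1 : 2%:R * D 0 0 * c1 0 1 - c1 0 0 * D 0 1 - c1 0 1 * D 1 1 = 0.
  have := EE (e1 K) (e1 K) 1; rewrite mulE !X !mulE ?e1E ?e2E /=.
  by move/fromE; apply; ring.
have s0 : 2%:R * D 1 1 * c2 0 0 - c2 0 0 * D 0 0 - c2 0 1 * D 1 0 = 0.
  have := EE (e2 K) (e2 K) 0; rewrite mulE !X !mulE ?e1E ?e2E /=.
  by move/fromE; apply; ring.
have s1 : c2 0 1 * D 1 1 - c2 0 0 * D 0 1 = 0.
  have := EE (e2 K) (e2 K) 1; rewrite mulE !X !mulE ?e1E ?e2E /=.
  by move/fromE; apply; ring.
rewrite d10 d01 !mulr0 !subr0 in r0 r1 s0 s1.
have D0 : D 0 0 = 0 -> D 1 1 = 0 -> D = 0.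
  move=> h00 h11; apply/matrixP => i j; rewrite mxE.
  by case: (ord2 i) => ->; case: (ord2 j) => ->.
case: (eqVneq (D 0 0) 0) => p0.
  case: (eqVneq (D 1 1) 0) => t0; first by left; exact: D0.
  exfalso.
  have f0 : c2 0 1 = 0 by move/eqP: s1; rewrite mulf_eq0 (negbTE t0) orbF => /eqP.
  have c0 : c1 0 1 = 0.
    have : c1 0 1 * D 1 1 = - (2%:R * D 0 0 * c1 0 1 - c1 0 1 * D 1 1) by rewrite p0; ring.
    rewrite r1 oppr0.
    by move/eqP; rewrite mulf_eq0 (negbTE t0) orbF => /eqP.
  by move: hdet; rewrite f0 c0 !mul0r mulr0 subrr eqxx.
right.
have a0 : c1 0 0 = 0 by move/eqP: r0; rewrite mulf_eq0 (negbTE p0) orbF => /eqP.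
have c0 : c1 0 1 != 0 by apply: contraNneq hdet => ->; rewrite a0 !mul0r subrr.
have e0 : c2 0 0 != 0 by apply: contraNneq hdet => ->; rewrite a0 !mul0r mulr0 subrr.
have ht : D 1 1 = 2%:R * D 0 0.
  have : c1 0 1 * (2%:R * D 0 0 - D 1 1) = 0 by rewrite -r1; ring.
  by move/eqP; rewrite mulf_eq0 (negbTE c0) /= subr_eq0 => /eqP.
have hp : D 0 0 = 2%:R * D 1 1.
  have : c2 0 0 * (2%:R * D 1 1 - D 0 0) = 0 by rewrite -s0; ring.
  by move/eqP; rewrite mulf_eq0 (negbTE e0) /= subr_eq0 => /eqP.
have h3 : (3%:R : K) = 0.
  have : 3%:R * D 0 0 = 0.
    have -> : (3%:R : K) * D 0 0 = 4%:R * D 0 0 - D 0 0 by ring.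
    by rewrite [X in _ - X]hp ht; ring.
  by move/eqP; rewrite mulf_eq0 (negbTE p0) orbF => /eqP.
have f0 : c2 0 1 = 0.
  have : c2 0 1 * D 0 0 = 0.
    have -> : c2 0 1 * D 0 0 = 3%:R * (c2 0 1 * D 0 0) - c2 0 1 * D 1 1 by rewrite ht; ring.
    by rewrite h3 s1 mul0r subrr.
  by move/eqP; rewrite mulf_eq0 (negbTE p0) orbF => /eqP.
split => //.
exists (c1 0 1 ^+ 2 * c2 0 0); split.
  by rewrite mulf_neq0 // expf_neq0.
exists (diag_mx (\row_j (if j == 0 then 1 else (c1 0 1)^-1))); split.
  rewrite unitmxE det_diag !big_ord_recl big_ord0 !mxE /= mulr1 mul1r unitfE.
  by rewrite invr_eq0.
move=> x y; apply: vecP; rewrite mulE !X /A2mul !mulE !mxE /= ?mulr0n ?mulr1n a0 f0.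
  by field.
by field.
Qed.

Lemma span_std c1 c2 : m (e1 K) (e1 K) = c1 -> m (e2 K) (e2 K) = c2 ->
  forall s : seq (vec2 K * vec2 K), exists al be : K,
    \sum_(p <- s) m p.1 p.2 = al *: c1 + be *: c2.
Proof.
move=> hc1 hc2; elim=> [|p s [al [be IH]]].
  by exists 0, 0; rewrite big_nil !scale0r addr0.
exists (p.1 0 0 * p.2 0 0 + al), (p.1 0 1 * p.2 0 1 + be).
rewrite big_cons IH expand hc1 hc2 !scalerDl.
by rewrite -!addrA; congr (_ + _); rewrite addrC -!addrA; congr (_ + _); rewrite addrC.
Qed.

Lemma det_std c1 c2 : m (e1 K) (e1 K) = c1 -> m (e2 K) (e2 K) = c2 ->
  square_full m -> c1 0 0 * c2 0 1 - c1 0 1 * c2 0 0 != 0.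
Proof.
move=> hc1 hc2 hsq.
have [s1 E1] := hsq (e1 K); have [s2 E2] := hsq (e2 K).
have [a1 [b1 F1]] := span_std hc1 hc2 s1.
have [a2 [b2 F2]] := span_std hc1 hc2 s2.
rewrite F1 in E1; rewrite F2 in E2.
have g (x y : vec2 K) (H : x = y) j : x 0 j = y 0 j by rewrite H.
have u1 := g _ _ E1 0; have u2 := g _ _ E1 1; have u3 := g _ _ E2 0; have u4 := g _ _ E2 1.
rewrite !mxE /= in u1 u2 u3 u4.
apply/eqP => hd.
have : (a1 * b2 - a2 * b1) * (c1 0 0 * c2 0 1 - c1 0 1 * c2 0 0) =
  (a1 * c1 0 0 + b1 * c2 0 0) * (a2 * c1 0 1 + b2 * c2 0 1) -
  (a1 * c1 0 1 + b1 * c2 0 1) * (a2 * c1 0 0 + b2 * c2 0 0) by ring.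
rewrite -u1 -u2 -u3 -u4 hd mulr0 mulr1 mul0r subr0 => /eqP.
by rewrite eq_sym oner_eq0.
Qed.

End M.

Definition mk2 (u v : vec2 K) : 'M[K]_2 := \matrix_(i < 2, j < 2) (if i == 0 then u 0 j else v 0 j).

Lemma mk2_mul x u v : x *m mk2 u v = x 0 0 *: u + x 0 1 *: v.
Proof. by apply: vecP; rewrite !mulE !mxE /=. Qed.

Lemma mk2_unit u v : (forall r s : K, r *: u + s *: v = 0 -> r = 0 /\ s = 0) ->
  mk2 u v \in unitmx.
Proof.
move=> Hi; rewrite unitmxE unitfE; apply/negP => /det0P [w wn0].
rewrite mk2_mul => /Hi [h0 h1]; move/negP: wn0; apply; apply/eqP/vecP.
  by rewrite h0 mxE.
by rewrite h1 mxE.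
Qed.

Lemma core_gen m D : bilinear_mul m -> is_evolution m -> square_full m ->
  is_derivation m D ->
  D = 0 \/ ((3%:R : K) = 0 /\ exists alpha : K, alpha != 0 /\ alg_iso m (A2mul alpha)).
Proof.
move=> Hb [b1 [b2 [Hi [h12 h21]]]] Hsq HD.
set B := mk2 b1 b2.
have Bu : B \in unitmx by apply: mk2_unit.
have eB1 : e1 K *m B = b1 by rewrite mk2_mul !mxE /= scale1r scale0r addr0.
have eB2 : e2 K *m B = b2 by rewrite mk2_mul !mxE /= scale1r scale0r add0r.
pose m' := fun x y => m (x *m B) (y *m B) *m invmx B.
have Hb' : bilinear_mul m'.
  split => a x y z; rewrite /m' mulmxDl -scalemxAl.
    by rewrite Hb.1 mulmxDl scalemxAl.
  by rewrite Hb.2 mulmxDl scalemxAl.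
have h12' : m' (e1 K) (e2 K) = 0 by rewrite /m' eB1 eB2 h12 mul0mx.
have h21' : m' (e2 K) (e1 K) = 0 by rewrite /m' eB1 eB2 h21 mul0mx.
have Hsq' : square_full m'.
  move=> z; have [s hs] := Hsq (z *m B).
  exists [seq (p.1 *m invmx B, p.2 *m invmx B) | p <- s].
  rewrite big_map /m' /= -mulmx_suml (eq_bigr (fun p => m p.1 p.2)).
    by rewrite -hs mulmxK.
  by move=> p _; rewrite !mulmxKV.
pose D' := B *m D *m invmx B.
have key x : x *m D' *m B = x *m B *m D.
  by rewrite /D' !mulmxA mulmxKV.
have HD' : is_derivation m' D'.
  move=> x y; rewrite /m' !key /D' !mulmxA mulmxKV // HD mulmxDl.
  done.
have := core_std Hb' h12' h21' HD' (erefl _) (erefl _) (det_std Hb' h12' h21' (erefl _) (erefl _) Hsq').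
case=> [hD'|[h3 [al [al0 [P [Pu HP]]]]]].
  left.
  have : B *m D *m invmx B *m B = B *m D := mulmxKV Bu _.
  rewrite -/D' hD' mul0mx => h.
  by rewrite -(mulKmx Bu D) -h mulmx0.
right; split => //; exists al; split => //.
exists (invmx B *m P); split.
  by rewrite unitmx_mul unitmx_inv Bu Pu.
move=> x y.
have := HP (x *m invmx B) (y *m invmx B).
by rewrite /m' !mulmxKV // !mulmxA.
Qed.

End S.
Lemma fromE3 (K : fieldType) (u v w : K) (z : K) : (3%:R : K) = 0 -> u = v ->
  w = 3%:R * z - (v - u) -> w = 0.
Proof. by move=> h3 -> ->; rewrite h3 mul0r subrr subr0. Qed.

Lemma eq3 (K : fieldType) (u v z : K) : (3%:R : K) = 0 -> u - v = 3%:R * z -> u = v.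
Proof. by move=> h3; rewrite h3 mul0r => /eqP; rewrite subr_eq0 => /eqP. Qed.

Lemma A2der (K : fieldType) (al : K) : (3%:R : K) = 0 -> al != 0 ->
  forall D : 'M[K]_2, is_derivation (A2mul al) D <->
    exists a : K, forall r s : K,
      (r *: e1 K + s *: e2 K) *m D = (a * r) *: e1 K - (a * s) *: e2 K.
Proof.
move=> h3 al0 D; split.
  move=> HD.
  have EE x y j := congr1 (fun v : vec2 K => v 0 j) (HD x y).
  have q0 := EE (e1 K) (e2 K) 0; have q1 := EE (e1 K) (e2 K) 1.
  have q2 := EE (e1 K) (e1 K) 1.
  rewrite /A2mul !mulE !mxE /= in q0 q1 q2.
  have d01 : D 0 1 = 0.
    have : al * D 0 1 = 0 by apply: (fromE q0); ring.
    by move/eqP; rewrite mulf_eq0 (negbTE al0) /= => /eqP.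
  have d10 : D 1 0 = 0 by apply: (fromE q1); ring.
  have d11 : D 1 1 = - D 0 0.
    apply/eqP; rewrite -subr_eq0 opprK; apply/eqP.
    by apply: (@fromE3 _ _ _ _ (D 0 0) h3 q2); ring.
  exists (D 0 0) => r t; apply: vecP; rewrite !mulE !mxE /= ?d01 ?d10 ?d11; ring.
case=> a Ha.
have g (x y : vec2 K) (H : x = y) j : x 0 j = y 0 j by rewrite H.
have u1 := g _ _ (Ha 1 0) 0; have u2 := g _ _ (Ha 1 0) 1.
have u3 := g _ _ (Ha 0 1) 0; have u4 := g _ _ (Ha 0 1) 1.
rewrite !mulE !mxE /= in u1 u2 u3 u4.
have d00 : D 0 0 = a.
  have : a - D 0 0 = 0 by apply: (fromE u1); ring.
  by move/eqP; rewrite subr_eq0 => /eqP.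
have d01 : D 0 1 = 0.
  have : - D 0 1 = 0 by apply: (fromE u2); ring.
  by move/eqP; rewrite oppr_eq0 => /eqP.
have d10 : D 1 0 = 0.
  have : - D 1 0 = 0 by apply: (fromE u3); ring.
  by move/eqP; rewrite oppr_eq0 => /eqP.
have d11 : D 1 1 = - a.
  have : - a - D 1 1 = 0 by apply: (fromE u4); ring.
  by move/eqP; rewrite subr_eq0 => /eqP.
move=> x y; apply: vecP; rewrite /A2mul !mulE !mxE /= d00 d01 d10 d11.
  by apply: (@eq3 _ _ _ (a * al * x 0 1 * y 0 1) h3); ring.
by apply: (@eq3 _ _ _ (- (a * x 0 0 * y 0 0)) h3); ring.
Qed.

Unset Implicit Arguments.

Theorem proposition5p3 (K : fieldType) (m : vec2 K -> vec2 K -> vec2 K) :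
  bilinear_mul m -> is_evolution m -> square_full m ->
  (* Der(A) = 0 except when char K = 3 and A is isomorphic to some A_{2,alpha} *)
  (~ (3%N \in [pchar K] /\ exists alpha : K, alpha != 0 /\ alg_iso m (A2mul alpha)) ->
     forall D : 'M[K]_2, is_derivation m D -> D = 0) /\
  (* in characteristic 3, Der(A_{2,alpha}) = { d_a : a in K } *)
  (3%N \in [pchar K] -> forall alpha : K, alpha != 0 ->
     forall D : 'M[K]_2, is_derivation (A2mul alpha) D <->
       exists a : K, forall r s : K,
         (r *: e1 K + s *: e2 K) *m D = (a * r) *: e1 K - (a * s) *: e2 K) /\
  (* Der(A) = 0 whenever A is not isomorphic to any A_{2,alpha} *)
  ((forall alpha : K, alpha != 0 -> ~ alg_iso m (A2mul alpha)) ->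
     forall D : 'M[K]_2, is_derivation m D -> D = 0).
Proof.
move=> Hb Hev Hsq; split; [|split].
- move=> H D HD; case: (core_gen Hb Hev Hsq HD) => // [[h3 hex]].
  exfalso; apply: H; split => //.
  by apply/andP; split => //; apply/eqP.
- move=> hc al al0 D; apply: A2der => //; exact: pcharf0 hc.
- move=> H D HD; case: (core_gen Hb Hev Hsq HD) => // [[h3 [al [al0 hi]]]].
  by case: (H al al0 hi).
Qed.
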